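(* Let $k$ be an odd positive integer. Then $$-\frac{3}{8k^3}\sum_{n=1}^{k-1}\cot\!\Big(\frac{2\pi n}{k}\Big)\cot\!\Big(\frac{\pi n}{k}\Big)\csc^2\!\Big(\frac{\pi n}{k}\Big)=-\frac{(k^2-1)(k^2-19)}{240k^3}.$$ *)

(* Defs.v *)
From Stdlib Require Import Reals List.
Open Scope R_scope.

Definition cot (x : R) : R := cos x / sin x.
Definition csc (x : R) : R := 1 / sin x.

(* finite sum  \sum_{n=a}^{b} f n  (empty if b < a) *)
Definition sum_range (a b : nat) (f : nat -> R) : R :=
  fold_right Rplus 0 (map f (seq a (S b - a))).

(* Main.v *)
Require Import Defs.
From Stdlib Require Import Reals List Lra Lia Arith.
Open Scope R_scope.

Lemma term_id x : sin x <> 0 -> cos x <> 0 ->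
  cot (2 * x) * cot x * csc x ^ 2 = ((cos x / sin x) ^ 4 - 1) / 2.
Proof.
intros hs hc. unfold cot, csc. rewrite sin_2a, cos_2a.
assert (H := sin2_cos2 x). unfold Rsqr in H.
replace (cos x * cos x - sin x * sin x) with
  ((cos x * cos x - sin x * sin x) * (sin x * sin x + cos x * cos x)) by (rewrite H; ring).
field. auto.
Qed.

Definition tm (x : R) := (x ^ 4 - 1) / 2.

Section Th.
Variable k : nat.
Hypothesis hk : Nat.Odd k.

Definition th (n : nat) := PI * INR n / INR k.

Lemma k_pos : (0 < INR k).
Proof. destruct hk as [m ->]. apply lt_0_INR. lia. Qed.

Lemma th_bounds n : (1 <= n <= k - 1)%nat -> 0 < th n < PI.
Proof.
intros hn. assert (hk0 := k_pos). unfold th.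
assert (1 <= INR n) by (apply (le_INR 1); lia).
assert (INR n < INR k) by (apply lt_INR; lia).
assert (H3 := PI_RGT_0).
split.
- apply Rdiv_lt_0_compat; [apply Rmult_lt_0_compat|]; lra.
- apply (Rmult_lt_reg_r (INR k)); auto. unfold Rdiv.
  rewrite Rmult_assoc, Rinv_l by lra. nra.
Qed.

Lemma sin_th n : (1 <= n <= k - 1)%nat -> sin (th n) <> 0.
Proof. intros hn. destruct (th_bounds n hn) as [h1 h2]. assert (h3 := sin_gt_0 _ h1 h2). lra. Qed.

Lemma cos_th n : cos (th n) <> 0.
Proof.
intros h. apply cos_eq_0_0 in h. destruct h as [z hz].
assert (hk0 := k_pos). assert (hp := PI_RGT_0). unfold th in hz.
assert (E : 2 * INR n = (2 * IZR z + 1) * INR k).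
{ apply (Rmult_eq_reg_r (PI / INR k)).
  - replace (2 * INR n * (PI / INR k)) with (2 * (PI * INR n / INR k)) by (field; lra). rewrite hz. field. lra.
  - apply Rgt_not_eq. apply Rdiv_lt_0_compat; lra. }
rewrite !INR_IZR_INZ in E.
change 2 with (IZR 2) in E. change 1 with (IZR 1) in E. rewrite <- mult_IZR, <- mult_IZR, <- plus_IZR, <- mult_IZR in E.
apply eq_IZR in E. destruct hk as [m hm]. subst k. lia.
Qed.

Lemma sin_kth n : sin (INR k * th n) = 0.
Proof.
apply sin_eq_0_1. exists (Z.of_nat n). rewrite <- INR_IZR_INZ.
unfold th. field. apply Rgt_not_eq, k_pos.
Qed.

Lemma tan_inj a b : (1 <= a <= k - 1)%nat -> (1 <= b <= k - 1)%nat ->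
  sin (th a) / cos (th a) = sin (th b) / cos (th b) -> a = b.
Proof.
intros ha hb h.
assert (hca := cos_th a). assert (hcb := cos_th b).
assert (hd : sin (th a - th b) = 0).
{ rewrite sin_minus.
  apply (Rmult_eq_reg_r (/ (cos (th a) * cos (th b)))).
  - rewrite Rmult_0_l. field_simplify; try auto.
    unfold Rdiv in h |- *.
    replace (sin (th a) * cos (th b) - cos (th a) * sin (th b))
      with (cos (th a) * cos (th b) * (sin (th a) * / cos (th a) - sin (th b) * / cos (th b))) by (field; auto).
    rewrite h. ring.
  - apply Rinv_neq_0_compat. apply Rmult_integral_contrapositive; auto. }
destruct (th_bounds a ha), (th_bounds b hb).
destruct (lt_eq_lt_dec a b) as [[lt|eq]|gt]; auto.
- exfalso. assert (INR a < INR b) by (apply lt_INR; auto).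
  assert (th a < th b).
  { unfold th, Rdiv. apply Rmult_lt_compat_r. apply Rinv_0_lt_compat, k_pos.
    apply Rmult_lt_compat_l; [apply PI_RGT_0|auto]. }
  assert (hh : 0 < sin (th b - th a)) by (apply sin_gt_0; lra).
  replace (th b - th a) with (- (th a - th b)) in hh by ring.
  rewrite sin_neg in hh. lra.
- exfalso. assert (INR b < INR a) by (apply lt_INR; auto).
  assert (th b < th a).
  { unfold th, Rdiv. apply Rmult_lt_compat_r. apply Rinv_0_lt_compat, k_pos.
    apply Rmult_lt_compat_l; [apply PI_RGT_0|auto]. }
  assert (0 < sin (th a - th b)) by (apply sin_gt_0; lra). lra.
Qed.

Lemma th2 n : 2 * PI * INR n / INR k = 2 * th n.
Proof. unfold th, Rdiv. ring. Qed.
End Th.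

Lemma step_sin n t : sin (INR (S n) * t) = sin (INR n * t) * cos t + cos (INR n * t) * sin t.
Proof. rewrite S_INR, Rmult_plus_distr_r, Rmult_1_l. apply sin_plus. Qed.
Lemma step_cos n t : cos (INR (S n) * t) = cos (INR n * t) * cos t - sin (INR n * t) * sin t.
Proof. rewrite S_INR, Rmult_plus_distr_r, Rmult_1_l. apply cos_plus. Qed.


From mathcomp Require Import all_boot all_algebra.
From mathcomp Require Import Rstruct.
From mathcomp Require Import ring lra zify.
Import GRing.Theory Num.Theory.

Section Poly.
Local Open Scope ring_scope.
Variable F : numFieldType.

Fixpoint SC (n : nat) : {poly F} * {poly F} :=
  match n with
  | 0%N => (0, 1)
  | m.+1 => ((SC m).1 + 'X * (SC m).2, (SC m).2 - 'X * (SC m).1)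
  end.

Lemma SC_size n : (size (SC n).1 <= n.+1)%N /\ (size (SC n).2 <= n.+1)%N.
Proof.
elim: n => [|n [IH1 IH2]] /=; first by rewrite size_poly0 size_poly1.
have hX (p : {poly F}) : (size p <= n.+1)%N -> (size ('X * p)%R <= n.+2)%N.
  move=> hp; apply: leq_trans (size_polyMleq _ _) _.
  by rewrite size_polyX.
split.
- apply: leq_trans (size_polyD _ _) _; rewrite geq_max (hX _ IH2) andbT.
  exact: leq_trans IH1 _.
- apply: leq_trans (size_polyD _ _) _; rewrite size_polyN geq_max (hX _ IH1) andbT.
  exact: leq_trans IH2 _.
Qed.

Lemma SC_coef n : let N := (n%:R : F) in
  ((SC n).1`_0 = 0 /\ [/\ (SC n).1`_1 = N, (SC n).1`_2 = 0,
      (SC n).1`_3 = - (N * (N - 1) * (N - 2)) / 6,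
      (SC n).1`_4 = 0 &
      (SC n).1`_5 = N * (N - 1) * (N - 2) * (N - 3) * (N - 4) / 120])
  /\ [/\ (SC n).2`_0 = 1, (SC n).2`_1 = 0, (SC n).2`_2 = - (N * (N - 1)) / 2,
      (SC n).2`_3 = 0 & (SC n).2`_4 = N * (N - 1) * (N - 2) * (N - 3) / 24].
Proof.
elim: n => [|n [[a0 [a1 a2 a3 a4 a5]] [b0 b1 b2 b3 b4]]] /=.
  rewrite !coefE /=. split; [split; [|split]|split]; by rewrite ?mul0r ?oppr0 ?mul0r.
rewrite !coefE /= a0 a1 a2 a3 a4 a5 b0 b1 b2 b3 b4 -natr1.
split; [split; [|split]|split]; field => //.
Qed.

Definition Rp (ws : seq F) : {poly F} := \prod_(w <- ws) (1 - w *: 'X).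
Definition Ec (i : nat) ws := (Rp ws)`_i.
Definition ps (j : nat) (ws : seq F) : F := \sum_(w <- ws) w ^+ j.

Lemma Rp_coef w ws i :
  Ec i (w :: ws) = Ec i ws - (if i is j.+1 then w * Ec j ws else 0).
Proof.
rewrite /Ec /Rp big_cons mulrBl mul1r -scalerAl coefB coefZ coefXM.
by case: i => [|i] //=; rewrite mulr0.
Qed.

Lemma newton ws :
  [/\ Ec 0 ws = 1, ps 1 ws = - Ec 1 ws,
      ps 2 ws = - Ec 1 ws * ps 1 ws - 2 * Ec 2 ws,
      ps 3 ws = - Ec 1 ws * ps 2 ws - Ec 2 ws * ps 1 ws - 3 * Ec 3 ws &
      ps 4 ws = - Ec 1 ws * ps 3 ws - Ec 2 ws * ps 2 ws - Ec 3 ws * ps 1 ws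
                - 4 * Ec 4 ws].
Proof.
elim: ws => [|w ws [e0 e1 e2 e3 e4]].
  rewrite /Ec /Rp /ps !big_nil !coefE /=; split; ring.
rewrite !Rp_coef /ps !big_cons -!/(ps _ ws) e4 e3 e2 e1 e0.
split; ring.
Qed.

Lemma prodX_Rp ys : 0 \notin ys ->
  \prod_(z <- ys) ('X - z%:P) = (\prod_(y <- ys) (- y))%:P * Rp (map GRing.inv ys).
Proof.
elim: ys => [|y ys IH]; first by rewrite /Rp !big_nil polyC1 mulr1.
rewrite in_cons negb_or => /andP [hy hys].
rewrite /Rp /= !big_cons -/(Rp _) IH // polyCM.
have -> : 'X - y%:P = (- y)%:P * (1 - y^-1 *: 'X).
  rewrite mulrBr mulr1 mul_polyC scalerA mulNr divff 1?eq_sym // scaleN1r polyCN.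
  by rewrite opprK addrC.
ring.
Qed.

Lemma factorS (S : {poly F}) (ys : seq F) : all (root S) (0 :: ys) ->
  uniq (0 :: ys) -> (size S <= (size ys).+2)%N ->
  exists c, S = c *: ('X * Rp (map GRing.inv ys)).
Proof.
move=> hr hu hs.
have hu' : uniq_roots (0 :: ys) by rewrite uniq_rootsE.
have [q hq] := uniq_roots_prod_XsubC hr hu'.
have sP : size (\prod_(z <- 0 :: ys) ('X - z%:P)) = (size ys).+2.
  by rewrite size_prod_XsubC.
have hq1 : (size q <= 1)%N.
  case: (eqVneq q 0) => [->|qn0]; first by rewrite size_poly0.
  have Pn0 : \prod_(z <- 0 :: ys) ('X - z%:P) != 0 by rewrite -size_poly_eq0 sP.
  move: hs; rewrite hq size_mul // sP addnS /=.
by move=> h; rewrite -(leq_add2r (size ys).+1) add1n.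
rewrite (size1_polyC hq1) in hq.
move: hu => /= /andP [h0 _].
exists (q`_0 * \prod_(y <- ys) (- y)).
rewrite hq big_cons prodX_Rp // polyC0 subr0 -mul_polyC polyCM; ring.
Qed.

Lemma power4 (k : nat) (ys : seq F) : (0 < k)%N ->
  all (root (SC k).1) (0 :: ys) -> uniq (0 :: ys) -> size ys = k.-1 ->
  ps 4 (map GRing.inv ys) =
  (k%:R - 1) * (k%:R - 2) * (k%:R ^+ 2 + 3 * k%:R - 13) / 45.
Proof.
move=> k0 hr hu hsz.
have hs : (size (SC k).1 <= (size ys).+2)%N.
  rewrite hsz prednK //; exact: (SC_size k).1.
have [c hc] := factorS (SC k).1 ys hr hu hs.
set ws := map GRing.inv ys in hc *.
have hcoef i : (SC k).1`_i.+1 = c * Ec i ws by rewrite hc coefZ coefXM.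
have [[a0 [a1 a2 a3 a4 a5]] _] := SC_coef k.
have [n0 n1 n2 n3 n4] := newton ws.
have hK : (k%:R : F) != 0 by rewrite pnatr_eq0 -lt0n.
have hc' : c = k%:R by rewrite -a1 hcoef n0 mulr1.
have E1 : Ec 1 ws = 0.
  by move: a2; rewrite hcoef hc' => /eqP; rewrite mulf_eq0 (negbTE hK) => /eqP.
have E3 : Ec 3 ws = 0.
  by move: a4; rewrite hcoef hc' => /eqP; rewrite mulf_eq0 (negbTE hK) => /eqP.
have E2 : Ec 2 ws = (SC k).1`_3 / k%:R by rewrite hcoef hc'; field.
have E4 : Ec 4 ws = (SC k).1`_5 / k%:R by rewrite hcoef hc'; field.
rewrite n4 n3 n2 n1 E1 E3 E2 E4 a3 a5.
field => //.
Qed.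
End Poly.

Section Glue.
Local Open Scope ring_scope.

Lemma trig_SC (t : R) : cos t <> 0 -> forall n : nat,
  sin (INR n * t) = cos t ^+ n * (SC R n).1.[sin t / cos t] /\
  cos (INR n * t) = cos t ^+ n * (SC R n).2.[sin t / cos t].
Proof.
move=> hc; elim=> [|n [IH1 IH2]].
  rewrite /= Rmult_0_l sin_0 cos_0 expr0 mul1r !hornerE; split; by [].
rewrite step_sin step_cos IH1 IH2 /= !hornerE !exprS ?RplusE ?RmultE ?RminusE.
have hc' : cos t != 0 by apply/eqP.
split; field => //.
Qed.


Lemma seq_iota a m : List.seq a m = iota a m.
Proof. by elim: m a => [|m IH] a //=; rewrite IH. Qed.

Lemma fold_sum (f : nat -> R) s : fold_right Rplus 0%R (map f s) = \sum_(n <- s) f n.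
Proof. by elim: s => [|x s IH] /=; rewrite ?big_nil ?big_cons ?IH. Qed.

Lemma sum4 (k : nat) : Nat.Odd k ->
  \sum_(n <- iota 1 (k - 1)) (cos (th k n) / sin (th k n)) ^+ 4 =
  (k%:R - 1) * (k%:R - 2) * (k%:R ^+ 2 + 3 * k%:R - 13) / 45.
Proof.
move=> hk.
have k0 : (0 < k)%N by case: hk => m ->; lia.
set l := iota 1 (k - 1).
have hb n : n \in l -> (1 <= n)%coq_nat /\ (n <= k - 1)%coq_nat.
  rewrite mem_iota => /andP [h1 h2]; split; lia.
set ys := map (fun n => sin (th k n) / cos (th k n)) l.
have -> : \sum_(n <- l) (cos (th k n) / sin (th k n)) ^+ 4 = ps R 4 (map GRing.inv ys).
  rewrite /ps /ys -map_comp big_map; apply: eq_bigr => n _ /=; by rewrite invf_div.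
apply: power4 => //.
- rewrite /= /root horner_coef0.
  have [[-> _] _] := SC_coef R k.
  rewrite eqxx /=.
  apply/allP => y /mapP [n hn ->].
  have [h1 _] := @trig_SC _ (cos_th k hk n) k.
  have h2 := sin_kth k hk n; rewrite RmultE h1 R0E in h2.
  apply/eqP; move/eqP: h2; rewrite mulf_eq0 => /orP [|/eqP //].
  rewrite expf_eq0 => /andP [_ /eqP h]; by case: (cos_th k hk n).
- rewrite /=; apply/andP; split.
  + apply/mapP => [[n hn]] /esym/eqP; rewrite mulf_eq0 invr_eq0 => /orP [] /eqP h.
    * exact: (sin_th k hk n (hb n hn) h).
    * exact: (cos_th k hk n h).
  + rewrite map_inj_in_uniq ?iota_uniq // => a b ha hb'.
    exact: (tan_inj k hk a b (hb a ha) (hb b hb')).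
- by rewrite size_map size_iota subn1.
Qed.

Lemma sum_aux (l : seq nat) (a : nat -> R) :
  \sum_(n <- l) tm (a n) =
  ((\sum_(n <- l) a n ^+ 4) - (size l)%:R) / 2.
Proof.
elim: l => [|x l IH]; first by rewrite !big_nil /= subr0 mul0r.
rewrite !big_cons IH /tm /= !RealsE /=.
rewrite -addn1 natrD; field => //.
Qed.
End Glue.

Open Scope R_scope.
Theorem mainTheorem7 (k : nat) (hk : Nat.Odd k) :
  - (3 / (8 * INR k ^ 3)) *
    sum_range 1 (k - 1) (fun n =>
      cot (2 * PI * INR n / INR k) * cot (PI * INR n / INR k)
      * (csc (PI * INR n / INR k)) ^ 2)
  = - ((INR k ^ 2 - 1) * (INR k ^ 2 - 19)) / (240 * INR k ^ 3).
Proof.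
have k0 : (0 < k)%N by case: hk => m ->; lia.
rewrite /sum_range Nat.sub_succ Nat.sub_0_r seq_iota fold_sum.
rewrite (eq_big_seq (fun n => tm (cos (th k n) / sin (th k n)))); last first.
  move=> n; rewrite mem_iota => /andP [h1 h2].
  have hn : (1 <= n)%coq_nat /\ (n <= k - 1)%coq_nat by split; lia.
  rewrite /= /tm th2 term_id //; [exact: sin_th | exact: cos_th].
rewrite sum_aux (sum4 k hk) size_iota.
rewrite !RealsE /= natrB //.
have hK : (k%:R : R)%R != 0%R by rewrite pnatr_eq0 -lt0n.
field => //.
Qed.
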